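(* Let $n,k,t$ be positive integers with $t\leq\frac{\log n}{2k}$, let $p\geq\frac{\log^3 n}{n}$, and fix $u\in\{1,\dots,n\}$. Let $\mathcal W$ be the set of walks $w=(w(0),w(1),\dots,w(k))$ of length $k$ in the complete graph (with self-loops) on $\{1,\dots,n\}$ with $w(0)=u$. For $\vec w=(w_1,\dots,w_{2t})\in\mathcal W^{2t}$, call $\vec w$ valid if every edge (unordered pair $\{a,b\}$, possibly $a=b$) traversed by the walks is traversed at least twice in total, counting multiplicity over all steps of all $2t$ walks, and let $|\vec w|$ be the number of distinct edges traversed. Let $\mathcal W^{2t}_{pair}$ be the set of valid $\vec w$. Then for every $\ell$, $$\big|\{\vec w\in\mathcal W^{2t}_{pair}:\ |\vec w|=\ell\}\big|\leq\binom{2tk}{2\ell}(2\ell-1)!!\cdot\ell^{2kt-2\ell}\,n^\ell.$$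
   Context: $(2\ell-1)!!=(2\ell-1)(2\ell-3)\cdots 1$. *)

(* Defs.v *)
From Stdlib Require Import Reals.
From mathcomp Require Import all_boot.
Set Implicit Arguments. Unset Strict Implicit. Unset Printing Implicit Defensive.

Fixpoint dfact (m : nat) : nat :=
  match m with
  | 0 => 1
  | 1 => 1
  | S (S m' as m1) => m * dfact m'
  end.

Definition walk (n k : nat) := {ffun 'I_k.+1 -> 'I_n}.

Definition walks (n k m : nat) := {ffun 'I_m -> walk n k}.

(* the (unordered, possibly loop) edge traversed by step j of walk w:
   {w(j), w(j+1)} *)
Definition step_edge (n k : nat) (w : walk n k) (j : 'I_k) : {set 'I_n} :=
  [set w (widen_ord (leqnSn k) j); w (lift ord0 j)].

Definition edges_of (n k m : nat) (W : walks n k m) : {set {set 'I_n}} :=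
  [set step_edge (W ij.1) ij.2 | ij : 'I_m * 'I_k].

Definition edge_mult (n k m : nat) (W : walks n k m) (e : {set 'I_n}) : nat :=
  #|[set ij : 'I_m * 'I_k | step_edge (W ij.1) ij.2 == e]|.

Definition valid (n k m : nat) (W : walks n k m) : bool :=
  [forall e in edges_of W, 2 <= edge_mult W e].

Definition starts_at (n k m : nat) (u : 'I_n) (W : walks n k m) : bool :=
  [forall i, W i ord0 == u].

Definition pair_walks_l (n k t : nat) (u : 'I_n) (l : nat) : {set walks n k (2 * t)} :=
  [set W : walks n k (2 * t) | [&& starts_at u W, valid W & #|edges_of W| == l]].

(* Main.v *)
Require Import Defs.
From Stdlib Require Import Reals.
From mathcomp Require Import all_boot.
From mathcomp Require Import all_algebra ring zify.
Set Implicit Arguments. Unset Strict Implicit. Unset Printing Implicit Defensive.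

Definition PP (a c : nat) : nat := 'C(a + 2 * c, a) * a`! * dfact (2 * c - 1).
Definition DD (n l r a c : nat) : nat :=
  'C(r, a + 2 * c) * PP a c * n ^ c * l ^ (r - (a + 2 * c)).

Lemma dfact_step c : dfact (2 * c.+1 - 1) = (2 * c.+1 - 1) * dfact (2 * c - 1).
Proof.
case: c => [|c] //.
have -> : 2 * c.+2 - 1 = (2 * c.+1 - 1).+2 by lia.
by [].
Qed.

Lemma PP_rec a c : 0 < a + 2 * c ->
  (if c is c'.+1 then PP a.+1 c' else 0) + a * PP a.-1 c = PP a c.
Proof.
rewrite /PP; case: c => [|c] /=.
  case: a => [|a] //= _.
  by rewrite ?add0n ?muln0 ?addn0 !binn factS /=; ring.
move=> _; case: a => [|a].
  rewrite mul0n addn0 bin1 bin0 dfact_step.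
  have -> : 2 * c.+1 - 1 = 1 + 2 * c by lia.
  rewrite fact0 (factS 0) fact0; ring.
rewrite /= dfact_step.
have -> : a.+1 + 2 * c.+1 = (a + 2 * c.+1).+1 by lia.
rewrite binS.
have -> : a.+2 + 2 * c = (a + 2 * c.+1) by lia.
have E := mul_bin_left (a + 2 * c.+1) a.+1.
have e2 : a + 2 * c.+1 - a.+1 = 2 * c.+1 - 1 by lia.
rewrite e2 in E.
rewrite (factS a.+1).
move: E; set y := (a + 2 * c.+1); set z := 2 * c.+1 - 1 => E.
have -> : 'C(y, a.+2) * (a.+2 * a.+1`!) * dfact (2 * c - 1) =
   (a.+2 * 'C(y, a.+2)) * a.+1`! * dfact (2 * c - 1) by ring.
rewrite E (factS a); ring.
Qed.

Lemma bin_pow_l l r x : l * ('C(r, x) * l ^ (r - x)) = 'C(r, x) * l ^ (r.+1 - x).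
Proof.
have [h|h] := leqP x r.
  by rewrite subSn // expnS; ring.
by rewrite bin_small //; ring.
Qed.

Lemma DD_rec n l r a c :
  (if c is c'.+1 then n * DD n l r a.+1 c' else 0) + a * DD n l r a.-1 c + l * DD n l r a c
  <= DD n l r.+1 a c.
Proof.
rewrite /DD.
case: (posnP (a + 2 * c)) => [x0|xpos].
  have a0 : a = 0 by lia.
  have c0 : c = 0 by lia.
  subst; rewrite /= !bin0 /PP /= !muln1 !mul1n !subn0 expnS; lia.
have [x' ex] : exists x', a + 2 * c = x'.+1 by exists (a + 2 * c).-1; lia.
have T1 : (if c is c'.+1 then n * ('C(r, a.+1 + 2 * c') * PP a.+1 c' * n ^ c' * l ^ (r - (a.+1 + 2 * c'))) else 0)
   = 'C(r, x') * (if c is c'.+1 then PP a.+1 c' else 0) * n ^ c * l ^ (r - x').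
  case: c ex {xpos} => [|c] ex; first by ring.
  have -> : a.+1 + 2 * c = x' by lia.
  by rewrite expnS; ring.
have T2 : a * ('C(r, a.-1 + 2 * c) * PP a.-1 c * n ^ c * l ^ (r - (a.-1 + 2 * c)))
   = 'C(r, x') * (a * PP a.-1 c) * n ^ c * l ^ (r - x').
  case: a ex {xpos T1} => [|a] ex; first by ring.
  have -> : a.+1.-1 + 2 * c = x' by lia.
  by ring.
rewrite T1 T2.
have T3 : l * ('C(r, a + 2 * c) * PP a c * n ^ c * l ^ (r - (a + 2 * c))) = 'C(r, a + 2 * c) * PP a c * n ^ c * l ^ (r - x').
  have H := bin_pow_l l r (a + 2 * c); rewrite ex subSS in H *.
  rewrite [RHS](_ : _ = PP a c * n ^ c * ('C(r, x'.+1) * l ^ (r - x'))); last by ring.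
  rewrite -H; ring.
rewrite T3 -(PP_rec xpos) ex binS subSS.
apply: eq_leq; ring.
Qed.

Fixpoint all_seqs (T : finType) (r : nat) : seq (seq T) :=
  if r is r'.+1 then flatten [seq [seq x :: s | s <- all_seqs T r'] | x <- enum T]
  else [:: [::]].

Lemma count_all_seqsS (T : finType) (P : pred (seq T)) r :
  count P (all_seqs T r.+1) = \sum_(x : T) count (fun s => P (x :: s)) (all_seqs T r).
Proof.
rewrite /= count_flatten -map_comp sumnE big_map big_enum /=.
by apply: eq_bigr => x _; rewrite count_map.
Qed.

Lemma mem_all_seqs (T : finType) r s : (s \in all_seqs T r) = (size s == r).
Proof.
elim: r s => [|r IH] [|x s] //=.
- apply/negbTE/flatten_mapP => -[y _ /mapP [? _ //]].
- rewrite eqSS -IH; apply/flatten_mapP/idP.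
    by move=> [y _ /mapP [s' hs' [_ ->]]].
  move=> hs; exists x; first by rewrite mem_enum.
  by apply/mapP; exists s.
Qed.

Fixpoint gen n (u : 'I_n) (rs : seq bool) (cur : 'I_n) (xs : seq 'I_n) : seq {set 'I_n} :=
  if rs is b :: rs' then
    if xs is x :: xs' then [set (if b then u else cur); x] :: gen u rs' x xs' else [::]
  else [::].

Definition once n (h : seq {set 'I_n}) : {set {set 'I_n}} := [set e | count_mem e h == 1].
Definition dst n (h : seq {set 'I_n}) : {set {set 'I_n}} := [set e | e \in h].
Definition Final n l (h : seq {set 'I_n}) : bool := (#|once h| == 0) && (#|dst h| == l).

Lemma count_rcons1 (T : eqType) (h : seq T) e y :
  count_mem y (rcons h e) = count_mem y h + (e == y).
Proof. by rewrite -cats1 count_cat /= addn0. Qed.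

Lemma dist_cat n (h h' : seq {set 'I_n}) : #|dst h| <= #|dst (h ++ h')|.
Proof.
apply: subset_leq_card; apply/subsetP => y; rewrite !inE mem_cat => ->; done.
Qed.

Lemma count_zero n l (h : seq {set 'I_n}) (F : seq 'I_n -> seq {set 'I_n}) s :
  l < #|dst h| -> count (fun xs => Final l (h ++ F xs)) s = 0.
Proof.
move=> hl; apply/eqP; rewrite -leqn0 leqNgt -has_count; apply/hasPn => xs _.
rewrite /Final negb_and; apply/orP; right.
have := dist_cat h (F xs); lia.
Qed.

Lemma edge_inj n (c0 : 'I_n) : injective (fun x : 'I_n => [set c0; x]).
Proof.
move=> x y /= E.
have hx : x \in [set c0; y] by rewrite -E !inE eqxx orbT.
have hy : y \in [set c0; x] by rewrite E !inE eqxx orbT.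
move: hx hy; rewrite !inE => /orP[/eqP hx|/eqP //] /orP[/eqP hy|/eqP //].
by rewrite hx hy.
Qed.

Lemma once_new n (h : seq {set 'I_n}) e : e \notin h -> #|once (rcons h e)| = #|once h|.+1.
Proof.
move=> he.
have -> : once (rcons h e) = e |: once h.
  apply/setP => y; rewrite !inE count_rcons1.
  case: (eqVneq e y) => [<-|ne] /=.
    by rewrite (count_memPn he).
  by rewrite addn0.
rewrite cardsU1 inE (count_memPn he) /=; lia.
Qed.

Lemma dist_new n (h : seq {set 'I_n}) e : e \notin h -> #|dst (rcons h e)| = #|dst h|.+1.
Proof.
move=> he.
have -> : dst (rcons h e) = e |: dst h.
  by apply/setP => y; rewrite !inE -cats1 mem_cat inE orbC.
by rewrite cardsU1 inE he.
Qed.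

Lemma dist_old n (h : seq {set 'I_n}) e : e \in h -> dst (rcons h e) = dst h.
Proof.
move=> he; apply/setP => y; rewrite !inE -cats1 mem_cat inE.
by case: (eqVneq y e) => [->|]; rewrite ?he ?orbF.
Qed.

Lemma once_one n (h : seq {set 'I_n}) e : count_mem e h == 1 -> #|once (rcons h e)| = #|once h|.-1.
Proof.
move=> he.
have -> : once (rcons h e) = once h :\ e.
  apply/setP => y; rewrite !inE count_rcons1.
  case: (eqVneq e y) => [<-|ne] /=.
    by rewrite (eqP he).
  by rewrite addn0.
by rewrite (cardsD1 e (once h)) inE he.
Qed.

Lemma once_many n (h : seq {set 'I_n}) e : count_mem e h != 1 -> e \in h -> once (rcons h e) = once h.
Proof.
move=> he1 he2.
apply/setP => y; rewrite !inE count_rcons1.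
case: (eqVneq e y) => [<-|ne] /=.
  have : 0 < count_mem e h by rewrite -has_pred1 has_count in he2 *.
  move: he1; case: (count_mem e h) => [|[|k]] //.
by rewrite addn0.
Qed.

Lemma card_sel n (c0 : 'I_n) (S : {set {set 'I_n}}) (A : {set 'I_n}) :
  (forall x, x \in A -> [set c0; x] \in S) -> #|A| <= #|S|.
Proof.
move=> H; rewrite -(card_imset _ (@edge_inj _ c0)); apply: subset_leq_card.
by apply/subsetP => y /imsetP [x] /H hx ->.
Qed.

Lemma main n (u : 'I_n) l (rs : seq bool) : forall (cur : 'I_n) h a c,
  #|once h| = a -> #|dst h| + c = l ->
  count (fun xs => Final l (h ++ gen u rs cur xs)) (all_seqs 'I_n (size rs))
    <= DD n l (size rs) a c.
Proof.
elim: rs => [|b rs IH] cur h a c ha hc.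
  rewrite /= cats0 addn0.
  case hF: (Final l h) => //.
  move/andP: hF => [/eqP h0 /eqP hd].
  have a0 : a = 0 by lia.
  have c0 : c = 0 by lia.
  by subst; rewrite a0 /DD /PP.
rewrite count_all_seqsS /=.
set c0 := if b then u else cur.
pose G x := if [set c0; x] \in h then
   (if count_mem [set c0; x] h == 1 then DD n l (size rs) a.-1 c else DD n l (size rs) a c)
   else (if c is c'.+1 then DD n l (size rs) a.+1 c' else 0).
apply: (@leq_trans (\sum_x G x)).
  apply: leq_sum => x _.
  rewrite (@eq_count _ _ (fun s => Final l (rcons h [set c0; x] ++ gen u rs x s)));
    last by move=> s; rewrite cat_rcons.
  rewrite /G; case: ifP => hin.
    have hd := dist_old hin.
    case: ifP => h1.
      apply: IH; first by rewrite once_one // ha.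
      by rewrite hd.
    apply: IH; first by rewrite once_many ?h1.
    by rewrite hd.
  have hn : [set c0; x] \notin h by rewrite hin.
  clear G; case: c hc => [|c'] hc.
    by rewrite count_zero // dist_new //; lia.
  apply: IH; first by rewrite once_new // ha.
  rewrite dist_new //; lia.
rewrite (bigID (fun x => [set c0; x] \in h)) /=.
rewrite (bigID (fun x => count_mem [set c0; x] h == 1)) /=.
rewrite (eq_bigr (fun _ => DD n l (size rs) a.-1 c)); last by move=> x /andP[hx h1]; rewrite /G /= hx h1.
rewrite [X in _ + X + _](eq_bigr (fun _ => DD n l (size rs) a c)); last by move=> x /andP[hx h1]; rewrite /G /= hx (negbTE h1).
rewrite [X in _ + X](eq_bigr (fun _ => if c is c'.+1 then DD n l (size rs) a.+1 c' else 0));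
  last by move=> x hx; rewrite /G /= (negbTE hx).
rewrite !sum_nat_cond_const.
apply: leq_trans (DD_rec n l (size rs) a c).
have cA : #|[set x | ([set c0; x] \in h) && (count_mem [set c0; x] h == 1)]| <= a.
  rewrite -ha; apply: (@card_sel _ c0) => x; rewrite inE => /andP[_ h1]; by rewrite inE.
have cB : #|[set x | ([set c0; x] \in h) && ~~ (count_mem [set c0; x] h == 1)]| <= l.
  apply: (@leq_trans #|dst h|); last lia.
  apply: (@card_sel _ c0) => x; rewrite inE => /andP[h1 _]; by rewrite inE.
have cC : #|[set x | [set c0; x] \notin h]| <= n.
  by apply: leq_trans (max_card _) _; rewrite card_ord.
have e1 : (if c is c'.+1 then n * DD n l (size rs) a.+1 c' else 0) =
          n * (if c is c'.+1 then DD n l (size rs) a.+1 c' else 0) by clear G; case: c {hc} => [|c']; rewrite ?muln0.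
rewrite e1.
set DA := (if c is c'.+1 then _ else _).
rewrite [X in _ <= X](_ : _ = a * DD n l (size rs) a.-1 c + l * DD n l (size rs) a c + n * DA); last by ring.
apply: leq_add; first apply: leq_add.
- exact: leq_mul cA (leqnn _).
- exact: leq_mul cB (leqnn _).
- exact: leq_mul cC (leqnn _).
Qed.

Definition blk (k : nat) : seq bool := true :: nseq k.-1 false.

Lemma gen_cat n (u : 'I_n) rs1 rs2 cur xs1 xs2 : size rs1 = size xs1 ->
  gen u (rs1 ++ rs2) cur (xs1 ++ xs2) = gen u rs1 cur xs1 ++ gen u rs2 (last cur xs1) xs2.
Proof.
elim: rs1 cur xs1 => [|b rs1 IH] cur [|x xs1] //= [e].
by rewrite IH.
Qed.

Lemma gen_iota n (u : 'I_n) (g : nat -> 'I_n) j : forall s b c, (if b then u else c) = g s ->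
  gen u (b :: nseq j false) c [seq g i.+1 | i <- iota s j.+1] =
  [seq [set g i; g i.+1] | i <- iota s j.+1].
Proof.
elim: j => [|j IH] s b c H; first by rewrite /= H.
transitivity ([set (if b then u else c); g s.+1] ::
   gen u (false :: nseq j false) (g s.+1) [seq g i.+1 | i <- iota s.+1 j.+1]); first by [].
by rewrite H (IH s.+1 false (g s.+1)).
Qed.

Lemma gen_walk n k (u : 'I_n) (w : walk n k) cur : 0 < k -> w ord0 = u ->
  gen u (blk k) cur [seq w (lift ord0 j) | j <- enum 'I_k] = [seq step_edge w j | j <- enum 'I_k].
Proof.
move=> k0 wu.
pose g i := w (inord i).
have e1 : [seq w (lift ord0 j) | j <- enum 'I_k] = [seq g i.+1 | i <- iota 0 k].
  rewrite -val_enum_ord -map_comp; apply: eq_map => j /=; rewrite /g; congr (w _).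
  by apply: val_inj; rewrite /= inordK // ltnS ltn_ord.
have e2 : [seq step_edge w j | j <- enum 'I_k] = [seq [set g i; g i.+1] | i <- iota 0 k].
  rewrite -val_enum_ord -map_comp; apply: eq_map => j /=; rewrite /g /step_edge.
  congr [set w _; w _]; apply: val_inj; rewrite /= inordK //.
    by apply: leq_trans (ltn_ord j) _.
  by rewrite ltnS ltn_ord.
rewrite e1 e2.
have [k' ek] : exists k', k = k'.+1 by exists k.-1; rewrite prednK.
have -> : blk k = true :: nseq k' false by rewrite /blk ek.
have -> : iota 0 k = iota 0 k'.+1 by rewrite ek.
apply: gen_iota; rewrite -wu /g; congr (w _); apply: val_inj; by rewrite /= inordK.
Qed.

Lemma size_flatten_const (I T : Type) (F : I -> seq T) k s :
  (forall i, size (F i) = k) -> size (flatten [seq F i | i <- s]) = size s * k.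
Proof.
move=> H; elim: s => [|i s IH] //=; by rewrite size_cat IH H mulSn.
Qed.

Definition xsW n k m (W : walks n k m) : seq 'I_n :=
  flatten [seq [seq W i (lift ord0 j) | j <- enum 'I_k] | i <- enum 'I_m].
Definition hW n k m (W : walks n k m) : seq {set 'I_n} :=
  flatten [seq [seq step_edge (W i) j | j <- enum 'I_k] | i <- enum 'I_m].
Definition rsW k m : seq bool := flatten [seq blk k | i <- enum 'I_m].

Lemma gen_W n k m (u : 'I_n) (W : walks n k m) : 0 < k -> starts_at u W ->
  gen u (rsW k m) u (xsW W) = hW W.
Proof.
move=> k0 /forallP Hu.
rewrite /rsW /xsW /hW.
suff H : forall (s : seq 'I_m) cur,
  gen u (flatten [seq blk k | i <- s]) cur
     (flatten [seq [seq W i (lift ord0 j) | j <- enum 'I_k] | i <- s]) =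
  flatten [seq [seq step_edge (W i) j | j <- enum 'I_k] | i <- s] by apply: H.
elim => [|i s IH] cur //.
have fl1 : forall (T : Type) (x : seq T), flatten [:: x] = x by move=> T x; rewrite /= cats0.
rewrite -[i :: s]cat1s !map_cat !flatten_cat !fl1.
rewrite gen_cat; last by rewrite size_map size_enum_ord /blk /= size_nseq prednK.
by rewrite gen_walk // ?IH //; apply/eqP.
Qed.

Lemma dist_hW n k m (W : walks n k m) : dst (hW W) = edges_of W.
Proof.
apply/setP => e; rewrite inE /edges_of.
apply/flatten_mapP/imsetP.
  move=> [i _ /mapP [j _ ->]]; by exists (i, j).
move=> [[i j] _ ->]; exists i; first by rewrite mem_enum.
by apply/mapP; exists j; rewrite ?mem_enum.
Qed.

Lemma count_hW n k m (W : walks n k m) e : count_mem e (hW W) = edge_mult W e.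
Proof.
rewrite /edge_mult -sum1dep_card /hW count_flatten -map_comp sumnE big_map big_enum /=.
transitivity (\sum_(i < m) \sum_(j < k) (if step_edge (W i) j == e then 1 else 0)); last first.
  by rewrite pair_bigA [RHS]big_mkcond.
apply: eq_bigr => i _; rewrite count_map -sum1_count big_mkcond big_enum /=.
by apply: eq_bigr.
Qed.

Lemma Final_hW n k t (u : 'I_n) l (W : walks n k (2 * t)) :
  W \in pair_walks_l k t u l -> Final l (hW W).
Proof.
rewrite inE => /and3P [_ hv hl].
rewrite /Final dist_hW hl andbT cards_eq0; apply/eqP/setP => e; rewrite !inE.
apply/negbTE/negP => h1.
have he : e \in hW W by rewrite -has_pred1 has_count (eqP h1).
have he' : e \in edges_of W by rewrite -dist_hW inE.
move/forall_inP: hv => /(_ e he').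
by rewrite -count_hW (eqP h1).
Qed.

Lemma xsW_inj n k m (u : 'I_n) (W W' : walks n k m) :
  starts_at u W -> starts_at u W' -> xsW W = xsW W' -> W = W'.
Proof.
move=> /forallP h1 /forallP h2 E.
have sh : forall V : walks n k m,
    shape [seq [seq V i (lift ord0 j) | j <- enum 'I_k] | i <- enum 'I_m] = [seq k | i <- enum 'I_m].
  by move=> V; rewrite /shape -map_comp; apply: eq_map => i /=; rewrite size_map size_enum_ord.
have E2 : [seq [seq W i (lift ord0 j) | j <- enum 'I_k] | i <- enum 'I_m] =
          [seq [seq W' i (lift ord0 j) | j <- enum 'I_k] | i <- enum 'I_m].
  rewrite -[LHS]flattenK -[RHS]flattenK !sh; congr reshape; exact: E.
apply/ffunP => i; apply/ffunP => x.
have Ei : [seq W i (lift ord0 j) | j <- enum 'I_k] = [seq W' i (lift ord0 j) | j <- enum 'I_k].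
  by apply: (proj2 (eq_in_map _ _ _) E2); rewrite mem_enum.
case: (unliftP ord0 x) => [j ->|->].
  by apply: (proj2 (eq_in_map _ _ _) Ei); rewrite mem_enum.
by rewrite (eqP (h1 i)) (eqP (h2 i)).
Qed.

Theorem proposition10 (n k t : nat) (p : R) (u : 'I_n) (l : nat) :
  0 < n -> 0 < k -> 0 < t ->
  Rle (INR t) (Rdiv (ln (INR n)) (Rmult 2 (INR k))) ->
  Rle (Rdiv (pow (ln (INR n)) 3) (INR n)) p ->
  #|pair_walks_l k t u l| <=
    'C(2 * t * k, 2 * l) * dfact (2 * l - 1) * l ^ (2 * k * t - 2 * l) * n ^ l.
Proof.
move=> n0 k0 t0 _ _.
have szr : size (rsW k (2 * t)) = 2 * t * k.
  rewrite /rsW (@size_flatten_const _ _ _ k) ?size_enum_ord //.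
  by move=> _; rewrite /blk /= size_nseq prednK.
have szx : forall W : walks n k (2 * t), size (xsW W) = 2 * t * k.
  move=> W; rewrite /xsW (@size_flatten_const _ _ _ k) ?size_enum_ord //.
  by move=> i; rewrite size_map size_enum_ord.
have H1 : #|pair_walks_l k t u l| <=
    count (fun xs => Final l ([::] ++ gen u (rsW k (2 * t)) u xs)) (all_seqs 'I_n (size (rsW k (2 * t)))).
  rewrite cardE -size_filter -(size_map (@xsW n k (2 * t))).
  apply: uniq_leq_size.
    rewrite (map_inj_in_uniq (s := enum (pair_walks_l k t u l))) ?enum_uniq // => W W'.
    rewrite !mem_enum !inE => /and3P [hW _ _] /and3P [hW' _ _].
    exact: xsW_inj hW hW'.
  move=> xs /mapP [W hWA ->]; rewrite mem_filter; apply/andP; split.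
    rewrite mem_enum in hWA.
    have hs : starts_at u W by move: hWA; rewrite inE => /and3P [].
    change (Final l ([::] ++ gen u (rsW k (2 * t)) u (xsW W))).
    rewrite cat0s (gen_W k0 hs); exact: Final_hW hWA.
  by rewrite mem_all_seqs szx szr.
apply: leq_trans H1 _.
have o0 : #|once ([::] : seq {set 'I_n})| = 0.
  by apply/eqP; rewrite cards_eq0; apply/eqP/setP => e; rewrite !inE.
have d0 : #|dst ([::] : seq {set 'I_n})| + l = l.
  suff -> : #|dst ([::] : seq {set 'I_n})| = 0 by [].
  by apply/eqP; rewrite cards_eq0; apply/eqP/setP => e; rewrite !inE.
apply: leq_trans (main u (rsW k (2 * t)) u o0 d0) _.
rewrite szr /DD /PP add0n bin0 fact0 ?mul1n ?muln1.
have -> : 2 * k * t = 2 * t * k by ring.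
apply: eq_leq; ring.
Qed.
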